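(* Let $\mathcal H$ be a family of graphs. The following are equivalent: (i) there is a constant $c=c(\mathcal H)$ such that every connected $\mathcal H$-free graph $G$ has fewer than $c$ vertices $v$ with $\mathrm{sdeg}(v)\ge 2$ (equivalently, fewer than $c$ cut vertices); (ii) there is a positive integer $n$ such that $\mathcal H\le \{K_n^*,\ K_{1,n}^*,\ P_n\}$.
   Context: All graphs are finite, simple, undirected. For graphs $H_1,H_2$, write $H_1\prec H_2$ if $H_2$ contains an induced subgraph isomorphic to $H_1$. A graph $G$ is $\mathcal H$-free if no $H\in\mathcal H$ satisfies $H\prec G$. For families $\mathcal H_1,\mathcal H_2$, write $\mathcal H_1\le\mathcal H_2$ if for every $H_2\in\mathcal H_2$ there is $H_1\in\mathcal H_1$ with $H_1\prec H_2$. For a vertex $v$ of $G$, the sharp degree is $\mathrm{sdeg}(v)=c(G-v)-c(G)+1$, where $c(\cdot)$ is the number of connected components. $K_n$ and $P_n$ are the complete graph and path on $n$ vertices. $K_{1,n}^*$ is obtained from the star $K_{1,n}$ by attaching a new pendant vertex to each leaf; $K_n^*$ is obtained from $K_n$ by attaching a new pendant vertex to each vertex. *)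

(* Defs.v *)
From mathcomp Require Import all_boot.
From mathcomp Require Import ssrint ssralg ssrnum.
Set Implicit Arguments. Unset Strict Implicit. Unset Printing Implicit Defensive.

(* A finite simple graph on vertex set 'I_n (every finite graph is isomorphic
   to one of these). *)
Record graph := Graph {
  gn : nat;
  gadj : rel 'I_gn;
  gsym : symmetric gadj;
  girr : irreflexive gadj }.
Arguments gadj : clear implicits.

Definition mkrel n (r : rel 'I_n) : rel 'I_n :=
  fun x y => (x != y) && (r x y || r y x).

Lemma mkrel_sym n (r : rel 'I_n) : symmetric (mkrel r).
Proof. by move=> x y; rewrite /mkrel eq_sym orbC. Qed.

Lemma mkrel_irr n (r : rel 'I_n) : irreflexive (mkrel r).
Proof. by move=> x; rewrite /mkrel eqxx. Qed.

Definition mkgraph n (r : rel 'I_n) : graph :=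
  @Graph n (mkrel r) (@mkrel_sym n r) (@mkrel_irr n r).

Definition induced (H1 H2 : graph) : Prop :=
  exists f : 'I_(gn H1) -> 'I_(gn H2),
    injective f /\ forall x y, gadj H2 (f x) (f y) = gadj H1 x y.

Definition gfamily := graph -> Prop.

Definition free (F : gfamily) (G : graph) : Prop :=
  forall H, F H -> ~ induced H G.

Definition fam_le (F1 F2 : gfamily) : Prop :=
  forall H2, F2 H2 -> exists2 H1, F1 H1 & induced H1 H2.

Definition restr (G : graph) (A : {set 'I_(gn G)}) : rel 'I_(gn G) :=
  fun x y => [&& x \in A, y \in A & gadj G x y].

Definition ncomp_on (G : graph) (A : {set 'I_(gn G)}) : nat :=
  n_comp (restr A) A.

Definition ncomp (G : graph) : nat := ncomp_on [set: 'I_(gn G)].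
Definition ncomp_del (G : graph) (v : 'I_(gn G)) : nat := ncomp_on [set~ v].

Definition connected (G : graph) : Prop := ncomp G = 1.

Definition sdeg (G : graph) (v : 'I_(gn G)) : int :=
  ((ncomp_del v)%:Z - (ncomp G)%:Z + 1)%R.

Definition path_graph (n : nat) : graph :=
  @mkgraph n (fun x y => (y : nat) == x.+1).

(* K_n^* : vertices 0..n-1 form a clique, vertex n+i is pendant at i *)
Definition Kstar (n : nat) : graph :=
  @mkgraph (n + n) (fun x y => ((x < n) && (y < n)) || ((x < n) && ((y : nat) == x + n))).

(* K_{1,n}^* : vertex 0 centre, 1..n leaves, n+i pendant at leaf i *)
Definition K1nstar (n : nat) : graph :=
  @mkgraph (n + n).+1 (fun x y => ((x == 0 :> nat) && (1 <= y <= n))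
                                  || ((1 <= x <= n) && ((y : nat) == x + n))).

Definition three_family (n : nat) : gfamily :=
  fun G => G = Kstar n \/ G = K1nstar n \/ G = path_graph n.

(* Main.v *)
Require Import Defs.
From mathcomp Require Import all_boot.
From mathcomp Require Import ssrint ssralg ssrnum.
From mathcomp Require Import zify.
Set Implicit Arguments. Unset Strict Implicit. Unset Printing Implicit Defensive.

Section Gen.
Variable G : graph.
Local Notation V := 'I_(gn G).
Local Notation adj := (gadj G).

Lemma adj_sym : symmetric adj. Proof. exact: gsym. Qed.
Lemma adj_irr x : adj x x = false. Proof. exact: girr. Qed.

Lemma restr_sym (A : {set V}) : symmetric (restr A).
Proof. by move=> x y; rewrite /restr adj_sym andbCA andbA. Qed.

Lemma csym (A : {set V}) : connect_sym (restr A).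
Proof. exact: (sym_connect_sym (restr_sym A)). Qed.

Lemma sep (A X : {set V}) x y :
  (forall a b, a \in X -> restr A a b -> b \in X) ->
  x \in X -> connect (restr A) x y -> y \in X.
Proof.
move=> cl xX /connectP[p pp ->]; elim: p x xX pp => //= z p IH x xX /andP[e pp].
exact: (IH z (cl _ _ xX e) pp).
Qed.

Lemma ncomp_ge2 (A : {set V}) x y : x \in A -> y \in A ->
  ~~ connect (restr A) x y -> 1 < ncomp_on A.
Proof.
move=> xA yA nc; rewrite /ncomp_on /n_comp_mem ltnNge; apply/negP.
move/card_le1_eqP => /(_ (root (restr A) x) (root (restr A) y)).
have rA z : z \in A -> root (restr A) z \in A.
  move=> zA; have := connect_root (restr A) z.
  case: (eqVneq (root (restr A) z) z) => [-> //|ne].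
  move=> c; apply: (sep (X := A) _ zA c) => a b _; by case/and3P.
move=> h; have /eqP: root (restr A) y = root (restr A) x.
  by apply: h; apply/andP; split; rewrite ?(roots_root (csym A)) //; apply: rA.
by rewrite eq_sym (root_connect (csym A)) (negbTE nc).
Qed.

Lemma restrT : restr [set: V] =2 adj.
Proof. by move=> x y; rewrite /restr !inE. Qed.

Lemma connected_connect : connected G -> forall x y, connect adj x y.
Proof.
rewrite /connected /ncomp /ncomp_on /n_comp_mem => hc x y.
have: #|predI (roots (restr [set: V])) (mem [set: V])| <= 1 by rewrite hc.
move/card_le1_eqP => /(_ (root (restr setT) x) (root (restr setT) y)).
move=> h; have /eqP: root (restr setT) y = root (restr setT) x.
  by apply: h; rewrite !inE andbT; apply: (roots_root (csym _)).
rewrite eq_sym (root_connect (csym _)).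
by rewrite (eq_connect restrT).
Qed.

Lemma hub_connected h : (forall x, connect adj h x) -> connected G.
Proof.
move=> hc; rewrite /connected /ncomp /ncomp_on /n_comp_mem.
apply/eqP; rewrite eqn_leq; apply/andP; split.
  apply/card_le1_eqP => a b; rewrite !inE /= /roots => /andP[/eqP ra _] /andP[/eqP rb _].
  rewrite -ra -rb; apply/eqP; rewrite (root_connect (csym _)).
  rewrite (eq_connect restrT); apply: (connect_trans (y := h)); last exact: hc.
  by rewrite (sym_connect_sym adj_sym) hc.
apply/card_gt0P; exists (root (restr setT) h); rewrite !inE /= andbT; exact: (roots_root (csym _)).
Qed.

Lemma sdeg_ge2 (v x y : V) : connected G -> x != v -> y != v ->
  ~~ connect (restr [set~ v]) x y -> (Posz 2 <= sdeg v)%R.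
Proof.
move=> cG xv yv nc.
have := ncomp_ge2 (A := [set~ v]) _ _ nc; rewrite !inE xv yv => /(_ isT isT) h.
rewrite /sdeg cG /ncomp_del.
have -> : ((ncomp_on [set~ v])%:Z - 1%:Z + 1 = (ncomp_on [set~ v])%:Z)%R.
  by rewrite GRing.subrK.
by rewrite lez_nat.
Qed.

End Gen.

Lemma induced_trans H1 H2 H3 : induced H1 H2 -> induced H2 H3 -> induced H1 H3.
Proof.
move=> [f [fi fa]] [g [gi ga]]; exists (g \o f); split; first exact: inj_comp.
by move=> x y /=; rewrite ga fa.
Qed.

Section Ramsey.
Variable T : finType.
Variable e : rel T.
Hypothesis esym : symmetric e.

Definition clq (B : {set T}) := {in B &, forall x y, x != y -> e x y}.
Definition ind (B : {set T}) := {in B &, forall x y, x != y -> ~~ e x y}.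

Lemma ramsey k : forall s t (A : {set T}), s + t = k -> 2 ^ k <= #|A| ->
  exists2 B : {set T}, B \subset A &
    (s <= #|B| /\ clq B) \/ (t <= #|B| /\ ind B).
Proof.
elim: k => [|k IH] s t A hk hA.
  have -> : s = 0 by lia.
  by exists set0; [exact: sub0set | left; split => // x y; rewrite inE].
case: s hk => [|s'] hk.
  by exists set0; [exact: sub0set | left; split => // x y; rewrite inE].
case: t hk => [|t'] hk.
  by exists set0; [exact: sub0set | right; split => // x y; rewrite inE].
have : 0 < #|A| by apply: leq_trans hA; rewrite expn_gt0.
case/card_gt0P => a aA.
set N := (A :\ a) :&: [set x | e a x].
set M := (A :\ a) :\: [set x | e a x].
have cNM : #|N| + #|M| = #|A|.-1 by rewrite cardsID (cardsD1 a A) aA.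
have NA : N \subset A by apply: subset_trans (subsetIl _ _) (subsetDl _ _).
have MA : M \subset A by apply: subset_trans (subsetDl _ _) (subsetDl _ _).
have aN : a \notin N by rewrite !inE eqxx.
have aM : a \notin M by rewrite !inE eqxx andbF.
have [hN|hM] : 2 ^ k <= #|N| \/ 2 ^ k <= #|M|.
  rewrite expnS in hA; case: (leqP (2^k) #|N|) => h; [by left | right; lia].
- have [B BN [[sB cB]|[tB iB]]] := IH s' t'.+1 N ltac:(lia) hN.
    exists (a |: B).
      by rewrite subUset sub1set aA (subset_trans BN NA).
    left; split.
      by rewrite cardsU1 (contra (fun h => subsetP BN a h) aN).
    move=> x y; rewrite !inE => /orP[/eqP->|xB] /orP[/eqP->|yB]; rewrite ?eqxx //.
    + by move=> _; have := subsetP BN y yB; rewrite !inE => /andP[_ ->].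
    + by move=> _; rewrite esym; have := subsetP BN x xB; rewrite !inE => /andP[_ ->].
    + exact: cB.
  exists B; first exact: subset_trans BN NA.
  by right.
- have [B BM [[sB cB]|[tB iB]]] := IH s'.+1 t' M ltac:(lia) hM.
    exists B; first exact: subset_trans BM MA.
    by left.
  exists (a |: B).
    by rewrite subUset sub1set aA (subset_trans BM MA).
  right; split.
    by rewrite cardsU1 (contra (fun h => subsetP BM a h) aM).
  move=> x y; rewrite !inE => /orP[/eqP->|xB] /orP[/eqP->|yB]; rewrite ?eqxx //.
  + by move=> _; have := subsetP BM y yB; rewrite !inE => /andP[-> _].
  + by move=> _; rewrite esym; have := subsetP BM x xB; rewrite !inE => /andP[-> _].
  + exact: iB.
Qed.

End Ramsey.

Section Emb.
Variable G : graph.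
Local Notation V := 'I_(gn G).
Local Notation adj := (gadj G).
Variable dd : V -> nat.
Hypothesis d_adj : forall x y, adj x y -> dd y <= (dd x).+1.

Lemma dfar x y : (dd x).+2 <= dd y -> adj x y = false.
Proof. by move=> h; apply/negP => /d_adj; lia. Qed.
Lemma dfar2 x y : (dd y).+2 <= dd x -> adj x y = false.
Proof. by move=> h; rewrite gsym; apply: dfar. Qed.

Definition psys (l : nat) (I : {set V}) (fx fy : V -> V) :=
  [/\ {in I, forall i, dd (fx i) = l /\ dd (fy i) = l.+1 /\ adj (fx i) (fy i)},
      {in I &, forall i j, i != j -> fx i != fx j},
      {in I &, forall i j, i != j -> fy i != fy j},
      {in I &, forall i j, i != j -> ~~ adj (fy i) (fx j)} &
      {in I &, forall i j, i != j -> ~~ adj (fy i) (fy j)}].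

Variables (l : nat) (I W : {set V}) (fx fy : V -> V) (n : nat) (r0 : V).
Hypothesis hsys : psys l I fx fy.
Hypothesis WI : W \subset I.
Hypothesis hn : n <= #|W|.

Definition g k := nth r0 (enum W) k.

Lemma gW k : k < n -> g k \in W.
Proof. by move=> kn; rewrite -mem_enum mem_nth // -cardE (leq_trans kn hn). Qed.
Lemma gI k : k < n -> g k \in I.
Proof. by move=> /gW; apply: (subsetP WI). Qed.

Lemma g_eq k k' : k < n -> k' < n -> (g k == g k') = (k == k').
Proof. by move=> kn kn'; rewrite nth_uniq ?enum_uniq // -cardE ?(leq_trans kn hn) ?(leq_trans kn' hn). Qed.

Let X k := fx (g k).
Let Y k := fy (g k).

Lemma X_eq k k' : k < n -> k' < n -> (X k == X k') = (k == k').
Proof.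
move=> kn kn'; case: (eqVneq k k') => [->|ne]; first by rewrite eqxx.
case: hsys => _ h _ _ _; apply/negbTE; apply: h; rewrite ?gI //.
by rewrite g_eq // ne.
Qed.
Lemma Y_eq k k' : k < n -> k' < n -> (Y k == Y k') = (k == k').
Proof.
move=> kn kn'; case: (eqVneq k k') => [->|ne]; first by rewrite eqxx.
case: hsys => _ _ h _ _; apply/negbTE; apply: h; rewrite ?gI //.
by rewrite g_eq // ne.
Qed.
Lemma dX k : k < n -> dd (X k) = l.
Proof. by move=> kn; case: hsys => h _ _ _ _; have [] := h _ (gI kn). Qed.
Lemma dY k : k < n -> dd (Y k) = l.+1.
Proof. by move=> kn; case: hsys => h _ _ _ _; have [_ []] := h _ (gI kn). Qed.
Lemma XY_eq k k' : k < n -> k' < n -> (X k == Y k') = false.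
Proof. by move=> kn kn'; apply/negbTE/eqP => e; have := dX kn; rewrite e dY //; lia. Qed.
Lemma YX_eq k k' : k < n -> k' < n -> (Y k == X k') = false.
Proof. by move=> kn kn'; rewrite eq_sym XY_eq. Qed.
Lemma XY_adj k k' : k < n -> k' < n -> adj (X k) (Y k') = (k == k').
Proof.
move=> kn kn'; case: (eqVneq k k') => [->|ne].
  by case: hsys => h _ _ _ _; have [_ []] := h _ (gI kn').
case: hsys => _ _ _ h _; rewrite gsym; apply/negbTE; apply: h; rewrite ?gI //.
by rewrite g_eq // eq_sym ne.
Qed.
Lemma YX_adj k k' : k < n -> k' < n -> adj (Y k) (X k') = (k == k').
Proof. by move=> kn kn'; rewrite gsym XY_adj // eq_sym. Qed.
Lemma YY_adj k k' : k < n -> k' < n -> adj (Y k) (Y k') = false.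
Proof.
move=> kn kn'; case: (eqVneq k k') => [->|ne]; first by rewrite girr.
case: hsys => _ _ _ _ h; apply/negbTE; apply: h; rewrite ?gI //.
by rewrite g_eq // ne.
Qed.

Lemma ordE m (a b : 'I_m) : (a == b) = ((a : nat) == b).
Proof. by []. Qed.

Lemma kstar_emb : {in W &, forall i j, i != j -> adj (fx i) (fx j)} -> induced (Kstar n) G.
Proof.
move=> cl.
have XX k k' : k < n -> k' < n -> adj (X k) (X k') = (k != k').
  move=> kn kn'; case: (eqVneq k k') => [->|ne]; first by rewrite girr.
  by apply: cl; rewrite ?gW // g_eq // ne.
rewrite /induced /=.
exists (fun a : 'I_(n + n) => if a < n then X a else Y (a - n)); split.
  move=> a b /=; have := ltn_ord a; have := ltn_ord b => hb ha.
  case: (ltnP a n) => a1; case: (ltnP b n) => b1 /eqP.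
  - by rewrite X_eq // => /eqP e; apply: ord_inj.
  - by rewrite XY_eq //; lia.
  - by rewrite YX_eq //; lia.
  - by rewrite Y_eq; [move=> /eqP e; apply: ord_inj; lia|lia|lia].
move=> a b; rewrite /mkrel ordE.
have := ltn_ord a; have := ltn_ord b => hb ha.
case: (ltnP a n) => a1; case: (ltnP b n) => b1.
- by rewrite XX //; lia.
- by rewrite XY_adj //; lia.
- by rewrite YX_adj //; lia.
- by rewrite YY_adj //; lia.
Qed.

Variable z : V.
Hypothesis dz : (dd z).+1 = l.
Hypothesis zW : {in W, forall i, adj z (fx i)}.
Hypothesis indW : {in W &, forall i j, i != j -> ~~ adj (fx i) (fx j)}.

Lemma k1star_emb : induced (K1nstar n) G.
Proof.
have XX k k' : k < n -> k' < n -> adj (X k) (X k') = false.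
  move=> kn kn'; case: (eqVneq k k') => [->|ne]; first by rewrite girr.
  by apply/negbTE; apply: indW; rewrite ?gW // g_eq // ne.
have zX k : k < n -> adj z (X k) by move=> kn; apply: zW; apply: gW.
have Xz k : k < n -> adj (X k) z by move=> kn; rewrite gsym zX.
have zY k : k < n -> adj z (Y k) = false by move=> kn; apply: dfar; rewrite dY //; lia.
have Yz k : k < n -> adj (Y k) z = false by move=> kn; rewrite gsym zY.
have zXe k : k < n -> (z == X k) = false.
  by move=> kn; apply/negbTE/eqP => e; have := dX kn; rewrite -e; lia.
have zYe k : k < n -> (z == Y k) = false.
  by move=> kn; apply/negbTE/eqP => e; have := dY kn; rewrite -e; lia.
rewrite /induced /=.
exists (fun a : 'I_(n + n).+1 => if (a : nat) == 0 then z else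
          if a <= n then X (a.-1) else Y (a - n.+1)); split.
  move=> a b /=; have := ltn_ord a; have := ltn_ord b => hb ha.
  case: (eqVneq (a : nat) 0) => a0; case: (eqVneq (b : nat) 0) => b0;
  try case: (leqP a n) => a1; try case: (leqP b n) => b1; move/eqP;
  rewrite ?eqxx ?zXe ?zYe 1?eq_sym ?zXe ?zYe ?X_eq ?Y_eq ?XY_eq ?YX_eq;
  try lia; move=> *; apply: ord_inj; lia.
move=> a b; rewrite /mkrel ordE.
have := ltn_ord a; have := ltn_ord b => hb ha.
case: (eqVneq (a : nat) 0) => a0; case: (eqVneq (b : nat) 0) => b0;
try case: (leqP a n) => a1; try case: (leqP b n) => b1; rewrite /=;
rewrite ?girr ?zX ?Xz ?zY ?Yz ?XX ?XY_adj ?YX_adj ?YY_adj; lia.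
Qed.

End Emb.

Section Dist.
Variable G : graph.
Local Notation V := 'I_(gn G).
Local Notation adj := (gadj G).
Variable r : V.
Hypothesis hcon : forall x, connect adj r x.

Definition step (B : {set V}) : {set V} := B :|: [set y | [exists x in B, adj x y]].
Definition Bset k := iter k step [set r].

Lemma Bset_mono k k' : k <= k' -> Bset k \subset Bset k'.
Proof.
elim: k' => [|k' IH]; first by rewrite leqn0 => /eqP->.
rewrite leq_eqVlt => /orP[/eqP->//|]; rewrite ltnS => /IH h.
apply: subset_trans h _; exact: subsetUl.
Qed.

Lemma Bset_adj k x y : x \in Bset k -> adj x y -> y \in Bset k.+1.
Proof. by move=> xB e; rewrite /= !inE; apply/orP; right; apply/existsP; exists x; rewrite xB. Qed.

Lemma inB_path p : forall k y, y \in Bset k -> path adj y p -> last y p \in Bset (k + size p).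
Proof.
elim: p => [|z p IH] k y yB /=; first by rewrite addn0.
case/andP=> e pp; rewrite addnS -addSn; apply: IH pp; exact: Bset_adj e.
Qed.

Definition inBp (x : V) : pred nat := fun k => x \in Bset k.

Lemma inB_ex x : exists k, inBp x k.
Proof.
have /connectP[p pp ->] := hcon x.
by exists (0 + size p); apply: inB_path pp; rewrite inE.
Qed.

Definition d x := ex_minn (inB_ex x).

Lemma inB_d x k : (x \in Bset k) = (d x <= k).
Proof.
rewrite /d; case: ex_minnP => m xm mmin; apply/idP/idP; first exact: mmin.
by move=> mk; apply: (subsetP (Bset_mono mk)).
Qed.

Lemma d_r : d r = 0.
Proof. by apply/eqP; rewrite -leqn0 -inB_d inE. Qed.

Lemma d_eq0 x : d x = 0 -> x = r.
Proof. by move=> h; have := leqnn (d x); rewrite {2}h -inB_d inE => /eqP. Qed.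

Lemma d_adj x y : adj x y -> d y <= (d x).+1.
Proof. by move=> e; rewrite -inB_d; apply: Bset_adj e; rewrite inB_d. Qed.

Lemma d_adj2 x y : adj x y -> d x <= (d y).+1.
Proof. by rewrite gsym; apply: d_adj. Qed.

Lemma d_far x y : (d x).+2 <= d y -> adj x y = false.
Proof. by move=> h; apply/negP => /d_adj; lia. Qed.

Lemma d_far2 x y : (d y).+2 <= d x -> adj x y = false.
Proof. by move=> h; rewrite gsym; apply: d_far. Qed.

Lemma par_ex x : x != r -> exists y, adj y x && (d y == (d x).-1).
Proof.
move=> xr; have dx0 : 0 < d x by rewrite lt0n; apply/negP => /eqP /d_eq0 /eqP; rewrite (negbTE xr).
have : x \in Bset (d x) by rewrite inB_d.
rewrite -(prednK dx0) /= !inE => /orP[|/existsP[y /andP[yB e]]].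
  by rewrite inB_d; lia.
exists y; rewrite e /=; rewrite inB_d in yB.
have := d_adj e; lia.
Qed.

Definition par x := if [pick y | adj y x && (d y == (d x).-1)] is Some y then y else x.

Lemma par_spec x : x != r -> adj (par x) x /\ d (par x) = (d x).-1.
Proof.
move=> xr; rewrite /par; case: pickP => [y /andP[e /eqP h] //|].
by case: (par_ex xr) => y h /(_ y); rewrite h.
Qed.

Lemma d_iter j x : j <= d x -> d (iter j par x) = d x - j.
Proof.
elim: j => [|j IH] jd /=; first by rewrite subn0.
have xr : iter j par x != r.
  by apply/eqP => h; have := IH (ltnW jd); rewrite h d_r; lia.
by rewrite (par_spec xr).2 IH; lia.
Qed.

Lemma chain_connect v x :
  (forall j, j <= d x -> iter j par x != v) -> connect (restr [set~ v]) r x.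
Proof.
move Ek: (d x) => k; elim: k x Ek => [|k IH] x Ek h.
  by rewrite (d_eq0 Ek) connect0.
have xr : x != r by apply/eqP => xr; move: Ek; rewrite xr d_r.
have [e dp] := par_spec xr.
apply: (connect_trans (y := par x)).
  apply: IH; first by rewrite dp Ek.
  by move=> j jd; have := h j.+1; rewrite iterSr; apply.
apply: connect1; rewrite /restr !inE e andbT.
by rewrite (h 0 (leq0n _)) (h 1 _).
Qed.

Definition Dv (v x : V) := ~~ connect (restr [set~ v]) r x.

Lemma Dv_chain v x : Dv v x -> exists2 j, j <= d x & iter j par x = v.
Proof.
move=> h; case: (boolP [exists j : 'I_(d x).+1, iter j par x == v]) => [/existsP[j /eqP e]|ne].
  by exists j => //; rewrite -ltnS.
case/negP: h; apply: chain_connect => j jd; apply/negP => /eqP e.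
by move/existsP: ne; apply; exists (Ordinal (jd : j < (d x).+1)); rewrite /= e.
Qed.

Lemma Dv_lt v x : Dv v x -> x != v -> d v < d x.
Proof.
move=> /Dv_chain[j jd e] xv; case: j jd e => [|j] jd e; first by rewrite -e eqxx in xv.
by rewrite -e d_iter //; lia.
Qed.

Lemma Dv_same v w x : Dv v x -> Dv w x -> d v = d w -> v = w.
Proof.
move=> /Dv_chain[j jd <-] /Dv_chain[k kd <-]; rewrite !d_iter // => h.
by have -> : j = k by lia.
Qed.

Lemma Dv_adj v x y : Dv v x -> adj x y -> x != v -> y != v -> Dv v y.
Proof.
move=> h e xv yv; apply/negP => c; case/negP: h.
apply: (connect_trans c); apply: connect1; by rewrite /restr !inE xv yv gsym e.
Qed.


Lemma ncomp_two (A : {set V}) z : z \in A -> 1 < ncomp_on A ->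
  exists2 u, u \in A & ~~ connect (restr A) z u.
Proof.
move=> zA h; case: (boolP [exists u in A, ~~ connect (restr A) z u]) => [/exists_inP[u uA c]|ne].
  by exists u.
have cs : connect_sym (restr A) by apply: sym_connect_sym => a b; rewrite /restr gsym andbCA andbA.
have all_c u : u \in A -> connect (restr A) z u.
  move=> uA; apply: contraNT ne => c; apply/exists_inP; by exists u.
rewrite ltnNge in h; case/negP: h; apply/card_le1_eqP => a b.
rewrite !inE /= /roots => /andP[/eqP ra aA] /andP[/eqP rb bA].
have := all_c a aA; have := all_c b bA; rewrite -!(root_connect cs) ra rb.
by move=> /eqP <- /eqP <-.
Qed.

Lemma to_nbr p : forall u v, path adj u p -> last u p = v -> u != v ->
  exists2 w, adj w v & connect (restr [set~ v]) u w.
Proof.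
elim: p => [|z p IH] u v /=; first by move=> _ -> /eqP.
case/andP=> e pp lp uv; case: (eqVneq z v) => [zv|zv].
  by exists u; [rewrite -zv | exact: connect0].
have [w wv c] := IH z v pp lp zv; exists w => //.
apply: connect_trans c; apply: connect1; by rewrite /restr !inE uv zv e.
Qed.

Lemma pend_ex v : v != r -> 1 < ncomp_del v -> exists p, adj v p && Dv v p.
Proof.
move=> vr h.
have rA : r \in [set~ v] by rewrite !inE eq_sym.
have [u uA nc] := ncomp_two rA h.
have /connectP[q qp ql] : connect adj u v.
  apply: (connect_trans (y := r)); last exact: hcon.
  by rewrite (sym_connect_sym (@adj_sym G)) hcon.
have uv : u != v by move: uA; rewrite !inE.
have [w wv c] := to_nbr qp (esym ql) uv.
exists w; rewrite gsym wv /=; apply/negP => rw; case/negP: nc.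
by apply: (connect_trans rw); rewrite csym.
Qed.


Lemma iter_nr a x : a < d x -> iter a par x != r.
Proof. by move=> h; apply/eqP => e; have := d_iter (ltnW h); rewrite e d_r; lia. Qed.

Lemma path_ind n x : 0 < n -> n.-1 <= d x -> induced (path_graph n) G.
Proof.
move=> n0 hx; rewrite /induced /=; exists (fun i : 'I_n => iter i par x); split.
  have ad : forall c : 'I_n, c <= d x.
    by move=> c; apply: leq_trans hx; rewrite -ltnS prednK //; exact: ltn_ord.
  move=> a b /(congr1 d); rewrite !d_iter ?ad // => h; apply: ord_inj.
  have := ad a; have := ad b; lia.
move=> a b; have la : a < n := ltn_ord a; have lb : b < n := ltn_ord b.
rewrite /mkrel.
case: (eqVneq a b) => [->|ab]; first by rewrite girr.
rewrite /=.
case: (boolP ((b : nat) == (a : nat).+1)) => [/eqP hb|nb].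
  rewrite hb iterS gsym; have fa : iter a par x != r by apply: iter_nr; lia.
  by rewrite (par_spec fa).1.
case: (boolP ((a : nat) == (b : nat).+1)) => [/eqP ha|na].
  rewrite ha iterS; have fb : iter b par x != r by apply: iter_nr; lia.
  by rewrite (par_spec fb).1.
have ab2 : (a : nat) <> b by move=> e; case/eqP: ab; apply: ord_inj.
move/eqP: na => na; move/eqP: nb => nb.
case: (ltnP a b) => h.
  by rewrite /= d_far2 // !d_iter; lia.
by rewrite /= d_far // !d_iter; lia.
Qed.


Variable n : nat.
Hypothesis n0 : 0 < n.

Fixpoint ff (l : nat) : nat :=
  if l is l'.+1 then 2 ^ (n + 2 ^ (n.*2 + ff l')) else 2.

Definition KG := induced (Kstar n) G \/ induced (K1nstar n) G.

Lemma descent l : forall (I : {set V}) fx fy, psys d l I fx fy -> ff l <= #|I| -> KG.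
Proof.
elim: l => [|l IH] I fx fy hs hI.
  have /card_gt1P [i [j [iI jI ij]]] : 1 < #|I| by [].
  case: hs => h hx _ _ _.
  have [di _] := h i iI; have [dj _] := h j jI.
  by case/negP: (hx i j iI jI ij); rewrite (d_eq0 di) (d_eq0 dj).
have esym : symmetric (fun i j => adj (fx i) (fx j)) by move=> i j; rewrite gsym.
have [B BI [[nB cB]|[mB iB]]] := ramsey esym (k := n + 2 ^ (n.*2 + ff l)) (s := n)
    (t := 2 ^ (n.*2 + ff l)) (A := I) erefl hI.
  by left; apply: (kstar_emb r hs BI nB).
case: (boolP [exists z, (d z == l) && (n <= #|[set i in B | adj z (fx i)]|)]).
  case/existsP=> z /andP[/eqP dz nz]; right.
  apply: (@k1star_emb G d (@d_adj) l.+1 I _ fx fy n r hs _ nz z).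
  - by apply: (subset_trans _ BI); apply/subsetP => i; rewrite inE => /andP[].
  - by rewrite dz.
  - by move=> i; rewrite !inE => /andP[].
  - by move=> i j; rewrite !inE => /andP[iB1 _] /andP[jB1 _]; apply: iB.
move=> hz.
have nb z : d z = l -> #|[set i in B | adj z (fx i)]| < n.
  move=> dz; rewrite ltnNge; apply: contra hz => h; apply/existsP; exists z; by rewrite dz eqxx.
have hsI i : i \in I -> [/\ d (fx i) = l.+1, d (fy i) = l.+2 & adj (fx i) (fy i)].
  by move=> iI; case: hs => h _ _ _ _; have [? []] := h i iI.
have pI i : i \in I -> adj (par (fx i)) (fx i) /\ d (par (fx i)) = l.
  move=> iI; have [dx _ _] := hsI i iI.
  have xr : fx i != r by apply/eqP => e; move: dx; rewrite e d_r.
  by have [e de] := par_spec xr; rewrite de dx.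
set cf := fun i j => adj (par (fx i)) (fx j) || adj (par (fx j)) (fx i).
have csym : symmetric cf by move=> i j; rewrite /cf orbC.
have [Z ZB [[qZ cZ]|[tZ indZ]]] := ramsey csym (k := n.*2 + ff l) (s := n.*2) (t := ff l) (A := B) erefl mB.
  exfalso.
  set a := fun i j => adj (par (fx i)) (fx j).
  have Z1 i : i \in Z -> \sum_(j in Z) (a i j : nat) < n.
    move=> iZ; have iI : i \in I by apply: (subsetP BI); apply: (subsetP ZB).
    apply: leq_ltn_trans (nb _ (pI i iI).2).
    rewrite -big_mkcondr /= sum1_card; apply: subset_leq_card; apply/subsetP => j.
    by rewrite !inE => /andP[jZ aij]; rewrite (subsetP ZB j jZ); exact: aij.
  have Z2 i : i \in Z -> #|Z| <= \sum_(j in Z) ((a i j : nat) + a j i).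
    move=> iZ; rewrite -sum1_card; apply: leq_sum => j jZ.
    case: (eqVneq i j) => [<-|ij].
      have iI : i \in I by apply: (subsetP BI); apply: (subsetP ZB).
      by rewrite /a (pI i iI).1.
    by have := cZ i j iZ jZ ij; rewrite /cf /a; case: (adj _ _); case: (adj _ _).
  have S1 : #|Z| * #|Z| <= \sum_(i in Z) \sum_(j in Z) ((a i j : nat) + a j i).
    rewrite -[X in X * _]sum1_card big_distrl /=; apply: leq_sum => i iZ; rewrite mul1n; exact: Z2.
  have S2 : \sum_(i in Z) \sum_(j in Z) ((a i j : nat) + a j i) =
            2 * \sum_(i in Z) \sum_(j in Z) (a i j : nat).
    rewrite mul2n -addnn; rewrite [X in _ = _ + X]exchange_big /=.
    by rewrite -big_split /=; apply: eq_bigr => i _; rewrite big_split.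
  have S3 : \sum_(i in Z) \sum_(j in Z) (a i j : nat) <= #|Z| * n.-1.
    rewrite -sum1_card big_distrl /= leq_sum // => i iZ; rewrite mul1n.
    by have := Z1 i iZ; case: (n).
  have := leq_trans S1 (eq_leq S2); move: S3 qZ; set q := #|Z|; set s := \sum_(i in Z) _.
  move=> S3 qZ S; have q0 : 0 < q by lia.
  have : q * q <= q * (2 * n.-1) by lia.
  rewrite leq_pmul2l //; lia.
apply: (IH Z (fun i => par (fx i)) fx _ tZ).
have ZI : Z \subset I by apply: subset_trans ZB BI.
case: hs => _ hx _ _ _.
split.
- move=> i iZ; have iI := subsetP ZI i iZ; have [dx _ _] := hsI i iI.
  by have [? ?] := pI i iI.
- move=> i j iZ jZ ij; apply/eqP => e.
  have := indZ i j iZ jZ ij; rewrite /cf e.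
  by have [-> _] := pI j (subsetP ZI j jZ).
- by move=> i j iZ jZ ij; apply: hx => //; apply: (subsetP ZI).
- move=> i j iZ jZ ij; rewrite gsym.
  by have := indZ i j iZ jZ ij; rewrite /cf negb_or => /andP[_ ->].
- by move=> i j iZ jZ ij; apply: iB => //; apply: (subsetP ZB).
Qed.


Definition pend v := if [pick p | adj v p && Dv v p] is Some p then p else v.

Lemma pend_spec v : v != r -> 1 < ncomp_del v -> adj v (pend v) && Dv v (pend v).
Proof.
move=> vr h; rewrite /pend; case: pickP => [p -> //|].
by case: (pend_ex vr h) => p hp /(_ p); rewrite hp.
Qed.

Lemma sdeg_ncomp (cG : connected G) (v : V) : (Posz 2 <= sdeg v)%R -> 1 < ncomp_del v.
Proof.
rewrite /sdeg cG.
have -> : ((ncomp_del v)%:Z - 1%:Z + 1 = (ncomp_del v)%:Z)%R by rewrite GRing.subrK.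
by rewrite lez_nat.
Qed.

Lemma cut_level (cG : connected G) : (forall x, d x < n.-1) ->
  2 + \sum_(l < n) ff l <= #|[set v : V | (Posz 2 <= sdeg v)%R]| -> KG.
Proof.
move=> dsmall; set S := [set v : V | _] => hS.
have [l ln hl] : exists2 l, l < n & ff l <= #|[set v in S | d v == l]|.
  case: (boolP [exists l : 'I_n, ff l <= #|[set v in S | d v == l]|]).
    by case/existsP => l hl; exists l.
  move=> ne; exfalso.
  have lt l : l < n -> #|[set v in S | d v == l]| < ff l.
    move=> ln; rewrite ltnNge; apply: contra ne => h; apply/existsP.
    by exists (Ordinal ln).
  have cnt m : m <= n -> #|[set v in S | d v < m]| <= \sum_(l < m) ff l.
    elim: m => [|m IH] mn.
      by rewrite big_ord0 leqn0 cards_eq0; apply/eqP/setP => v; rewrite !inE andbF.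
    rewrite big_ord_recr /=.
    apply: leq_trans (_ : #|[set v in S | d v < m] :|: [set v in S | d v == m]| <= _).
      apply: subset_leq_card; apply/subsetP => v; rewrite !inE ltnS leq_eqVlt.
      by case/andP => -> /orP[->|->]; rewrite ?orbT.
    rewrite cardsU; apply: leq_trans (leq_subr _ _) _.
    apply: leq_add; first by apply: IH; lia.
    by apply: ltnW; apply: lt.
  have := cnt n (leqnn n).
  have -> : [set v in S | d v < n] = S.
    apply/setP => v; rewrite inE (_ : d v < n) ?andbT //.
    by have := dsmall v; lia.
  lia.
case: l ln hl => [|l] ln hl.
  have : #|[set v in S | d v == 0]| <= 1.
    apply: leq_trans (_ : #|[set r]| <= 1); last by rewrite cards1.
    apply: subset_leq_card; apply/subsetP => v; rewrite !inE => /andP[_ /eqP /d_eq0 ->].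
    by rewrite eqxx.
  by move: hl => /=; lia.
set I := [set v in S | d v == l.+1].
apply: (descent (l := l.+1) (I := I) (fx := id) (fy := pend)) hl.
have vI v : v \in I -> [/\ d v = l.+1, v != r & 1 < ncomp_del v].
  rewrite !inE => /andP[sv /eqP dv]; split => //.
    by apply/eqP => e; move: dv; rewrite e d_r.
  exact: sdeg_ncomp.
have pI v : v \in I -> [/\ adj v (pend v), Dv v (pend v) & d (pend v) = l.+2].
  move=> /vI[dv vr nv]; have /andP[e D] := pend_spec vr nv; split => //.
  have pv : pend v != v by apply/eqP => h; move: e; rewrite h girr.
  have := Dv_lt D pv; have := d_adj e; rewrite dv; lia.
split.
- by move=> v /[dup] /vI[dv _ _] /pI[e _ dp].
- by [].
- move=> v w /[dup] /vI[dv _ _] /pI[_ Dvp _] /[dup] /vI[dw _ _] /pI[_ Dwp _] vw.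
  apply/eqP => e; rewrite e in Dvp; case/eqP: vw; apply: (Dv_same Dvp Dwp); congruence.
- move=> v w /[dup] /vI[dv _ _] /pI[_ Dvp dp] /vI[dw _ _] vw /=; apply/negP => e.
  have pv : pend v != v by apply/eqP => h; move: dp; rewrite h dv; lia.
  have := Dv_lt (Dv_adj Dvp e pv _) _; rewrite eq_sym vw => /(_ isT isT); lia.
- move=> v w /[dup] /vI[dv _ _] /pI[_ Dvp dp] /[dup] /vI[dw _ _] /pI[_ Dwp dq] vw.
  apply/negP => e.
  have pv : pend v != v by apply/eqP => h; move: dp; rewrite h dv; lia.
  have qv : pend w != v by apply/eqP => h; move: dq; rewrite h dv; lia.
  case/eqP: vw; apply: (Dv_same (Dv_adj Dvp e pv qv) Dwp); congruence.
Qed.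

End Dist.

Lemma main_dir n : 0 < n -> exists c, forall G : graph, connected G ->
  c <= #|[set v : 'I_(gn G) | (Posz 2 <= sdeg v)%R]| ->
  induced (Kstar n) G \/ induced (K1nstar n) G \/ induced (path_graph n) G.
Proof.
move=> n0; exists (2 + \sum_(l < n) ff n l) => G cG hc.
have : 0 < #|[set v : 'I_(gn G) | (Posz 2 <= sdeg v)%R]| by apply: leq_trans hc; lia.
case/card_gt0P => r _.
have hcon : forall x, connect (gadj G) r x by move=> x; apply: connected_connect.
case: (boolP [exists x, n.-1 <= d hcon x]) => [/existsP[x hx]|ne].
  by right; right; apply: (path_ind n0 hx).
have ds x : d hcon x < n.-1.
  by rewrite ltnNge; apply: contra ne => h; apply/existsP; exists x.
by case: (cut_level n0 cG ds hc) => h; [left|right; left].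
Qed.

Lemma many_cut G (k c : nat) (P : pred 'I_(gn G)) : k + c <= gn G ->
  (forall a : 'I_(gn G), k <= a -> a < k + c -> P a) -> c <= #|[set v | P v]|.
Proof.
move=> hk hP.
have hf : forall i : 'I_c, k + i < gn G by move=> i; have := ltn_ord i; lia.
set f := fun i : 'I_c => Ordinal (hf i).
have : #|f @: [set: 'I_c]| = c.
  rewrite card_imset ?cardsT ?card_ord // => a b /(congr1 val) /= h; apply: ord_inj; lia.
move=> <-; apply: subset_leq_card; apply/subsetP => x /imsetP[i _ ->]; rewrite inE.
by apply: hP => /=; have := ltn_ord i; lia.
Qed.

Lemma third N (v p : 'I_N) : 2 < N -> exists y : 'I_N, y != v /\ y != p.
Proof.
move=> hN.
have h0 : 0 < N by lia. have h1 : 1 < N by lia.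
case: (eqVneq (v : nat) 0) => v0; case: (eqVneq (p : nat) 0) => p0.
- by exists (Ordinal h1); split; apply/eqP => /(congr1 val) /=; lia.
- case: (eqVneq (p : nat) 1) => p1.
    by exists (Ordinal hN); split; apply/eqP => /(congr1 val) /=; lia.
  by exists (Ordinal h1); split; apply/eqP => /(congr1 val) /=; lia.
- case: (eqVneq (v : nat) 1) => v1.
    by exists (Ordinal hN); split; apply/eqP => /(congr1 val) /=; lia.
  by exists (Ordinal h1); split; apply/eqP => /(congr1 val) /=; lia.
- by exists (Ordinal h0); split; apply/eqP => /(congr1 val) /=; lia.
Qed.

Lemma pendant_cut G (v p : 'I_(gn G)) : connected G -> 2 < gn G ->
  (forall b, gadj G p b -> b = v) -> p != v -> (Posz 2 <= sdeg v)%R.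
Proof.
move=> cG h3 hp pv; have [y [yv yp]] := third v p h3.
apply: (sdeg_ge2 cG pv yv); apply/negP => c.
have : y \in [set p].
  apply: (sep _ _ c); last by rewrite inE.
  move=> a b; rewrite inE => /eqP -> /and3P[_ bA e].
  by move: bA; rewrite (hp b e) !inE eqxx.
by rewrite inE (negbTE yp).
Qed.

Lemma hub2 G (h : 'I_(gn G)) :
  (forall x, x = h \/ gadj G h x \/ exists y, gadj G h y && gadj G y x) -> connected G.
Proof.
move=> hh; apply: (hub_connected (h := h)) => x.
case: (hh x) => [->|[e|[y /andP[e1 e2]]]]; first exact: connect0.
  exact: connect1.
by apply: (connect_trans (connect1 e1)); apply: connect1.
Qed.

Lemma kstar_conn n : 0 < n -> connected (Kstar n).
Proof.
move=> n0; have h0 : 0 < n + n by lia.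
apply: (@hub2 (Kstar n) (Ordinal h0)); rewrite /= => x.
have xl : x < n + n := ltn_ord x.
case: (eqVneq (x : nat) 0) => x0; first by left; apply: ord_inj.
right; case: (ltnP x n) => xn.
  by left; rewrite /= /mkrel ordE /=; lia.
case: (eqVneq (x : nat) n) => xn'.
  by left; rewrite /= /mkrel ordE /=; lia.
right; have hy : x - n < n + n by lia.
exists (Ordinal hy); rewrite /= /mkrel !ordE /=; lia.
Qed.

Lemma kstar_cut n (a : 'I_(gn (Kstar n))) : 1 < n -> a < n -> (Posz 2 <= sdeg a)%R.
Proof.
move=> n1 an; have hp : a + n < gn (Kstar n) by change (a + n < n + n); lia.
apply: (pendant_cut (p := Ordinal hp)).
- by apply: kstar_conn; lia.
- by rewrite /=; lia.
- move=> b; rewrite /= /mkrel ordE /= => h; apply: ord_inj => /=.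
  have := ltn_ord b; rewrite /= => hb.
  move: h hb an; set vb := nat_of_ord b; set va := nat_of_ord a; lia.
- by rewrite ordE /=; move: an; set va := nat_of_ord a; lia.
Qed.

Lemma k1_conn n : connected (K1nstar n).
Proof.
have h0 : 0 < (n + n).+1 by [].
apply: (@hub2 (K1nstar n) (Ordinal h0)); rewrite /= => x.
have xl : x < (n + n).+1 := ltn_ord x.
case: (eqVneq (x : nat) 0) => x0; first by left; apply: ord_inj.
right; case: (leqP x n) => xn.
  by left; rewrite /= /mkrel ordE /=; lia.
right; have hy : x - n < (n + n).+1 by lia.
exists (Ordinal hy); rewrite /= /mkrel !ordE /=; lia.
Qed.

Lemma k1_cut n (a : 'I_(gn (K1nstar n))) : 0 < a -> a <= n -> (Posz 2 <= sdeg a)%R.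
Proof.
move=> a0 an; have hp : a + n < gn (K1nstar n) by change (a + n < (n + n).+1); lia.
apply: (pendant_cut (p := Ordinal hp)).
- exact: k1_conn.
- by rewrite /=; lia.
- move=> b; rewrite /= /mkrel ordE /= => h; apply: ord_inj => /=.
  have := ltn_ord b; rewrite /= => hb.
  move: h hb an a0; set vb := nat_of_ord b; set va := nat_of_ord a; lia.
- by rewrite ordE /=; move: an a0; set va := nat_of_ord a; lia.
Qed.

Lemma path_conn n : 0 < n -> connected (path_graph n).
Proof.
move=> n0; apply: (@hub_connected (path_graph n) (Ordinal n0)) => x.
have : forall k (hk : k < n), connect (gadj (path_graph n)) (Ordinal n0) (Ordinal hk).
  elim=> [|k IH] hk; first by apply: eq_connect0; apply: ord_inj.
  have hk' : k < n by lia.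
  apply: (connect_trans (IH hk')); apply: connect1; rewrite /= /mkrel ordE /=; lia.
by move/(_ x (ltn_ord x)); have -> : Ordinal (ltn_ord x) = x by apply: ord_inj.
Qed.

Lemma path_cut n (a : 'I_(gn (path_graph n))) : 0 < a -> a.+2 <= n -> (Posz 2 <= sdeg a)%R.
Proof.
move=> a0 an; have n0 : 0 < n by lia. have hl : n.-1 < n by lia.
have ha : (a : nat) < n := ltn_ord a.
apply: (@sdeg_ge2 (path_graph n) a (Ordinal n0) (Ordinal hl)).
- exact: path_conn.
- by rewrite ordE /=; move: a0; set va := nat_of_ord a; lia.
- by rewrite ordE /=; move: an; set va := nat_of_ord a; lia.
apply/negP => c.
have : Ordinal hl \in [set b : 'I_n | b < a].
  apply: (sep _ _ c); last by rewrite inE /=; move: a0; set va := nat_of_ord a; lia.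
  move=> u w; rewrite !inE => uA /and3P[_ wA e].
  move: e wA uA; rewrite /= /mkrel ordE /= !inE ordE /=.
  set vu := nat_of_ord u; set vw := nat_of_ord w; set va := nat_of_ord a; lia.
rewrite inE /=; move: an; set va := nat_of_ord a; lia.
Qed.

From Stdlib Require Import Classical.

Unset Implicit Arguments.
Theorem theorem1p7 (F : gfamily) :
  (exists c : nat, forall G : graph, connected G -> free F G ->
      #|[set v : 'I_(gn G) | (Posz 2 <= sdeg v)%R]| < c)
  <->
  (exists2 n : nat, 0 < n & fam_le F (three_family n)).
Proof.
split.
  case=> c hp.
  have nf G : connected G -> c <= #|[set v : 'I_(gn G) | (Posz 2 <= sdeg v)%R]| ->
      exists2 H, F H & induced H G.
    move=> cG hc; apply: NNPP => hn.
    have : free F G by move=> H FH iH; apply: hn; exists H.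
    by move/(hp G cG); rewrite ltnNge hc.
  exists (c + 2); first by lia.
  move=> H2 [->|[->|->]].
  - apply: nf; first by apply: kstar_conn; lia.
    apply: (many_cut (k := 0)); first by rewrite /=; lia.
    by move=> a _ ha; apply: kstar_cut; lia.
  - apply: nf; first exact: k1_conn.
    apply: (many_cut (k := 1)); first by rewrite /=; lia.
    by move=> a h1 ha; apply: k1_cut; lia.
  - apply: nf; first by apply: path_conn; lia.
    apply: (many_cut (k := 1)); first by rewrite /=; lia.
    by move=> a h1 ha; apply: path_cut; lia.
case=> n n0 hle.
have [c hc] := main_dir n0.
exists c => G cG fr; rewrite ltnNge; apply/negP => hcG.
have use X : three_family n X -> induced X G -> False.
  move=> tX iX; have [H FH iH] := hle X tX.
  exact: (fr H FH (induced_trans iH iX)).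
case: (hc G cG hcG) => [i|[i|i]]; apply: (use _ _ i); rewrite /three_family; tauto.
Qed.
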